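(* Let $\mathcal{K}$ be a Fraïssé class in a finite relational language $\mathcal{L}$, let $\mathbf{K}=\mathrm{Flim}(\mathcal{K})$ have finite big Ramsey degrees, and let $\mathbf{K}^*$ be a recurrent big Ramsey structure for $\mathbf{K}$. Then $\mathbf{K}^*$ interprets an ordering of the underlying set $K$ of $\mathbf{K}$ of order type $\omega$.
   Context: For structures $\mathbf{A},\mathbf{B}$, $\mathrm{Emb}(\mathbf{A},\mathbf{B})$ is the set of embeddings. For $\mathbf{A}\in\mathcal{K}$, the big Ramsey degree $\mathrm{BRD}(\mathbf{A},\mathbf{K})$ is the least $t$ (if it exists) such that for every $r>t$ and every coloring $\chi:\mathrm{Emb}(\mathbf{A},\mathbf{K})\to r$ there is $g\in\mathrm{Emb}(\mathbf{K},\mathbf{K})$ with $|\chi[g\circ\mathrm{Emb}(\mathbf{A},\mathbf{K})]|\le t$. For $\mathcal{L}^*\supseteq\mathcal{L}$ and an $\mathcal{L}^*$-expansion $\mathbf{M}^*$ of $\mathbf{M}$ (same underlying set, $\mathcal{L}$-reduct equal to $\mathbf{M}$), $\mathbf{M}^*(\mathbf{B})$ denotes the set of $\mathcal{L}^*$-expansions of the finite structure $\mathbf{B}$ embeddable in $\mathbf{M}^*$, and for $f\in\mathrm{Emb}(\mathbf{B},\mathbf{M})$, $\mathbf{M}^*\cdot f$ is the unique $\mathbf{B}^*\in\mathbf{M}^*(\mathbf{B})$ with $f\in\mathrm{Emb}(\mathbf{B}^*,\mathbf{M}^* )$. A big Ramsey structure for $\mathbf{K}$ is an expansion $\mathbf{K}^*$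 such that for every $\mathbf{A}\in\mathcal{K}$, $|\mathbf{K}^*(\mathbf{A})|=\mathrm{BRD}(\mathbf{A},\mathbf{K})$ and for every $g\in\mathrm{Emb}(\mathbf{K},\mathbf{K})$ the coloring $f\mapsto\mathbf{K}^*\cdot f$ takes all $|\mathbf{K}^*(\mathbf{A})|$ values on $g\circ\mathrm{Emb}(\mathbf{A},\mathbf{K})$. It is recurrent if $\mathrm{Emb}(\mathbf{K}^*,\mathbf{K}^*\cdot\eta)\ne\emptyset$ for every $\eta\in\mathrm{Emb}(\mathbf{K},\mathbf{K})$, where $\mathbf{K}^*\cdot\eta$ is the expansion of $\mathbf{K}$ pulled back along $\eta$. *)

(* Defs.v *)
From mathcomp Require Import all_boot.
Set Implicit Arguments. Unset Strict Implicit. Unset Printing Implicit Defensive.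

Record lang := Lang { sym :> Type; arity : sym -> nat }.

Definition structure (L : lang) (T : Type) := forall s : L, ('I_(arity s) -> T) -> Prop.

Definition is_emb (L : lang) (A B : Type) (SA : structure L A) (SB : structure L B)
  (f : A -> B) : Prop :=
  injective f /\ forall (s : L) (x : 'I_(arity s) -> A), SA s x <-> SB s (f \o x).

(** Pull-back of a structure along a map (this is  M^* . f  of the paper). *)
Definition pullback (L : lang) (A B : Type) (SB : structure L B) (f : A -> B)
  : structure L A := fun s x => SB s (f \o x).

(** Expanded language  L^* = L + E  (any L^* containing L is of this form up to renaming). *)
Definition lang_ext (L : lang) (E : Type) (arE : E -> nat) : lang :=
  @Lang (sym L + E)%type (fun s => match s with inl s => arity s | inr e => arE e end).

Definition is_expansion (L : lang) (E : Type) (arE : E -> nat) (T : Type)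
  (M : structure L T) (Ms : structure (lang_ext L arE) T) : Prop :=
  forall (s : L) (x : 'I_(arity s) -> T), Ms (inl s) x <-> M s x.

Definition has_card (T : Type) (S : T -> Prop) (n : nat) : Prop :=
  exists e : 'I_n -> T, injective e /\ forall x, S x <-> exists i, e i = x.

(** K (on nat, i.e. countably infinite) is ultrahomogeneous: any two embeddings of a
    finite structure differ by an automorphism. Then K is the Fraisse limit of its age. *)
Definition ultrahomogeneous (L : lang) (K : structure L nat) : Prop :=
  forall n (A : structure L 'I_n) (f g : 'I_n -> nat),
    is_emb A K f -> is_emb A K g ->
    exists sg : nat -> nat, is_emb K K sg /\ bijective sg /\ forall i, g i = sg (f i).

Definition in_age (L : lang) (K : structure L nat) n (A : structure L 'I_n) : Prop :=
  exists f, is_emb A K f.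

Definition ramsey_bound (L : lang) n (A : structure L 'I_n) (K : structure L nat) (t : nat)
  : Prop :=
  forall r, t < r -> forall chi : ('I_n -> nat) -> 'I_r,
    exists g : nat -> nat, is_emb K K g /\
      exists cs : seq 'I_r, size cs <= t /\
        forall f, is_emb A K f -> chi (g \o f) \in cs.

Definition BRD (L : lang) n (A : structure L 'I_n) (K : structure L nat) (t : nat) : Prop :=
  ramsey_bound A K t /\ forall t', ramsey_bound A K t' -> t <= t'.

Definition finite_BRD (L : lang) (K : structure L nat) : Prop :=
  forall n (A : structure L 'I_n), in_age K A -> exists t, BRD A K t.

Definition Kstar_of (L : lang) (E : Type) (arE : E -> nat) (K : structure L nat)
  (Ks : structure (lang_ext L arE) nat) n (A : structure L 'I_n)
  : structure (lang_ext L arE) 'I_n -> Prop :=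
  fun B => is_expansion A B /\ exists f, is_emb B Ks f.

Definition big_ramsey_structure (L : lang) (E : Type) (arE : E -> nat)
  (K : structure L nat) (Ks : structure (lang_ext L arE) nat) : Prop :=
  is_expansion K Ks /\
  forall n (A : structure L 'I_n), in_age K A ->
    (exists t, BRD A K t /\ has_card (Kstar_of K Ks A) t) /\
    (forall g, is_emb K K g ->
       forall B, Kstar_of K Ks A B ->
         exists f, is_emb A K f /\ pullback Ks (g \o f) = B).

Definition recurrent (L : lang) (E : Type) (arE : E -> nat)
  (K : structure L nat) (Ks : structure (lang_ext L arE) nat) : Prop :=
  forall eta, is_emb K K eta -> exists h, is_emb Ks (pullback Ks eta) h.

Definition pair_fn (a b : nat) : 'I_2 -> nat := fun i => if i == ord0 then a else b.

(** M interprets an ordering of its underlying set of order type omega: there is a binary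
    relation determined by the (quantifier-free) type of pairs of distinct elements in M
    which is a strict linear order isomorphic to (nat, <). *)
Definition interprets_omega_order (L : lang) (M : structure L nat) : Prop :=
  exists lt : nat -> nat -> Prop,
    (forall a b c d, a <> b -> c <> d ->
       (forall (s : L) (x : 'I_(arity s) -> 'I_2),
          M s (pair_fn a b \o x) <-> M s (pair_fn c d \o x)) ->
       (lt a b <-> lt c d)) /\
    exists h : nat -> nat, bijective h /\ forall a b, lt a b <-> h a < h b.

(* Main.v *)
Require Import Defs.
From mathcomp Require Import all_boot.
From mathcomp Require Import zify.
From Stdlib Require Import ClassicalEpsilon FunctionalExtensionality PropExtensionality.
Set Implicit Arguments. Unset Strict Implicit. Unset Printing Implicit Defensive.

Definition pb (P : Prop) : bool := if excluded_middle_informative P then true else false.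
Lemma pbP (P : Prop) : reflect P (pb P).
Proof. rewrite /pb; case: excluded_middle_informative => h; by constructor. Qed.

Definition im (k : nat -> nat) m := pb (exists x, k x = m).
Definition RR (k : nat -> nat) M := count (im k) (iota 0 M).
Lemma R_S (k : nat -> nat) M : RR k M.+1 = RR k M + im k M.
Proof. by rewrite /RR -addn1 iotaD count_cat /= addn0. Qed.
Lemma R_mono (k : nat -> nat) M N : M <= N -> RR k M <= RR k N.
Proof. move=> le; rewrite /RR -(subnKC le) iotaD count_cat; apply: leq_addr. Qed.
Lemma R_lt (k : nat -> nat) a b : k a < k b -> RR k (k a) < RR k (k b).
Proof.
move=> lt; apply: (@leq_trans (RR k (k a).+1)); last exact: R_mono.
rewrite R_S; have -> : im k (k a) by apply/pbP; exists a.
by rewrite addn1.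
Qed.
Lemma R_iff (k : nat -> nat) a b : k a < k b <-> RR k (k a) < RR k (k b).
Proof.
split; first exact: R_lt.
move=> h; case: (ltngtP (k a) (k b)) => // [c|c].
- by have := R_lt c; lia.
- by move: h; rewrite c ltnn.
Qed.
Lemma R_hit (k : nat -> nat) n M : n < RR k M -> exists x, RR k (k x) = n.
Proof.
elim: M => [|M IH] //=; rewrite R_S.
case: (ltnP n (RR k M)) => [h _|h1 h2]; first exact: IH.
have : im k M by move: h2 h1; case: (im k M) => //=; lia.
move/pbP=> [x kx]; exists x; rewrite kx; move: h2 h1; case: (im k M) => /=; lia.
Qed.
Lemma rank_iso (k : nat -> nat) : injective k ->
  exists h, bijective h /\ forall a b, k a < k b <-> h a < h b.
Proof.
move=> kinj.
set r := fun a => RR k (k a).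
have rinj : injective r.
  move=> a b e; case: (ltngtP (k a) (k b)) => c.
  - by have := R_lt c; rewrite /r in e; lia.
  - by have := R_lt c; rewrite /r in e; lia.
  - exact: kinj.
have big : forall n, exists a, n <= r a.
  move=> n; apply: NNPP => nh.
  have hl : forall a : 'I_n.+1, r a < n.
    move=> a; case: (ltnP (r a) n) => // c; case: nh; by exists a.
  have := @leq_card _ _ (fun a : 'I_n.+1 => Ordinal (hl a)).
  rewrite !card_ord ltnn => H; suff: false by []; apply: H => a b [] /rinj e; exact: val_inj.
have surj : forall n, exists a, r a = n.
  move=> n; case: (big n.+1) => a ha; exact: (@R_hit k n (k a)).
pose g n := proj1_sig (constructive_indefinite_description _ (surj n)).
have gK : cancel g r by move=> n; rewrite /g; case: constructive_indefinite_description.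
exists r; split; last by move=> a b; exact: R_iff.
exists g => //; move=> a; apply: rinj; by rewrite gK.
Qed.

Lemma emb_comp (L : lang) (A B C : Type) (SA : structure L A) (SB : structure L B)
  (SC : structure L C) f g : is_emb SA SB f -> is_emb SB SC g -> is_emb SA SC (g \o f).
Proof.
move=> [fi fr] [gi gr]; split; first exact: inj_comp.
move=> s x; rewrite fr; exact: (gr s (f \o x)).
Qed.

Lemma emb_id (L : lang) (A : Type) (SA : structure L A) : is_emb SA SA id.
Proof. by split. Qed.

Definition Pg (LS : finType) (ar : LS -> nat) (K : structure (Lang ar) nat)
  (E : Type) (arE : E -> nat) (Ks : structure (lang_ext (Lang ar) arE) nat)
  (A : structure (Lang ar) 'I_2) (G : nat -> nat) :=
  forall f1 f2, is_emb A K f1 -> is_emb A K f2 ->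
    pullback Ks (G \o f1) = pullback Ks (G \o f2) ->
    (G (f1 ord0) < G (f1 ord_max)) = (G (f2 ord0) < G (f2 ord_max)).

Lemma Pg_comp (LS : finType) (ar : LS -> nat) (K : structure (Lang ar) nat)
  (E : Type) (arE : E -> nat) (Ks : structure (lang_ext (Lang ar) arE) nat)
  (A : structure (Lang ar) 'I_2) G g' :
  Pg K Ks A G -> is_emb K K g' -> Pg K Ks A (G \o g').
Proof.
move=> P g'e f1 f2 e1 e2 peq.
exact: (P (g' \o f1) (g' \o f2) (emb_comp e1 g'e) (emb_comp e2 g'e) peq).
Qed.

Lemma step (LS : finType) (ar : LS -> nat) (K : structure (Lang ar) nat)
  (E : Type) (arE : E -> nat) (Ks : structure (lang_ext (Lang ar) arE) nat)
  (A : structure (Lang ar) 'I_2) g0 :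
  big_ramsey_structure K Ks -> is_emb K K g0 ->
  exists g', is_emb K K g' /\ Pg K Ks A (g0 \o g').
Proof.
move=> [Kexp BRS] g0e.
case: (classic (in_age K A)) => [age|nage]; last first.
  exists id; split; first exact: emb_id.
  move=> f1 f2 e1; case: nage; by exists f1.
have [[t [[rb _] [e [einj ecard]]]] surj] := BRS 2 A age.
have inK : forall f, is_emb A K f -> Kstar_of K Ks A (pullback Ks f).
  move=> f [fi fr]; split.
    move=> s x; rewrite /pullback; rewrite (Kexp s (f \o x)); exact: iff_sym (fr s x).
  by exists f; split.
case: age => f0 f0e.
have [i0 _] := (ecard (pullback Ks (g0 \o f0))).1 (inK _ (emb_comp f0e g0e)).
have tpos : 0 < t := leq_ltn_trans (leq0n _) (ltn_ord i0).
pose tau f := match [pick i | pb (e i = pullback Ks (g0 \o f))] with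
  Some i => val i | None => 0 end.
pose c (f : 'I_2 -> nat) := nat_of_bool (g0 (f ord0) < g0 (f ord_max)).
pose chi f : 'I_(t.*2).+1 := inord (tau f + t * c f).
have taub : forall f, tau f < t.
  by move=> f; rewrite /tau; case: pickP => [j _|_ //]; exact: ltn_ord.
have cb : forall f, c f <= 1 by move=> f; rewrite /c; case: (_ < _).
have chival : forall f, val (chi f) = tau f + t * c f.
  move=> f; rewrite /chi /= inordK //; have := taub f; have := cb f; rewrite -muln2; nia.
have [|g' [g'e [cs [szcs Hcs]]]] := rb (t.*2).+1 _ chi; first by rewrite -muln2; lia.
exists g'; split => //.
have tauE : forall f i, e i = pullback Ks (g0 \o (g' \o f)) -> tau (g' \o f) = i.
  move=> f i ei; rewrite /tau; case: pickP => [j /pbP ej | /(_ i)].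
    by rewrite (einj j i _) // ej ei.
  by rewrite (introT (pbP _) ei).
pose dec (x : 'I_(t.*2).+1) : 'I_t := Ordinal (ltn_pmod x tpos).
have decchi : forall f, val (dec (chi f)) = tau f.
  move=> f; rewrite /= chival; have := taub f; have := cb f; move=> h1 h2.
  by rewrite addnC mulnC modnMDl modn_small.
pose S := [set x in cs].
have imT : dec @: S = setT.
  apply/setP => i; rewrite inE; apply/imsetP.
  have [f [fe pf]] := surj (g0 \o g') (emb_comp g'e g0e) (e i) ((ecard _).2 (ex_intro _ i erefl)).
  exists (chi (g' \o f)); first by rewrite inE; exact: Hcs.
  apply: val_inj; by rewrite decchi (tauE f i (esym pf)).
have decinj : {in S &, injective dec}.
  apply/imset_injP; rewrite imT cardsT card_ord eqn_leq.
  have -> : #|S| <= t by rewrite cardsE; apply: leq_trans (card_size cs) szcs.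
  by rewrite -[X in X <= _](card_ord t) -cardsT -imT leq_imset_card.
move=> f1 f2 e1 e2 peq.
have ht : tau (g' \o f1) = tau (g' \o f2).
  rewrite /tau.
  change (pullback Ks (g0 \o (g' \o f1))) with (pullback Ks ((g0 \o g') \o f1)).
  change (pullback Ks (g0 \o (g' \o f2))) with (pullback Ks ((g0 \o g') \o f2)).
  by rewrite peq.
have := decinj (chi (g' \o f1)) (chi (g' \o f2)).
rewrite !inE => /(_ (Hcs _ e1) (Hcs _ e2)) hh.
have : chi (g' \o f1) = chi (g' \o f2) by apply: hh; apply: val_inj; rewrite !decchi.
move/(congr1 val); rewrite !chival ht => hc.
move: hc; rewrite /c /=.
case: (_ < _); case: (_ < _) => //= h; have := tpos; lia.
Qed.

Definition PT (LS : finType) (ar : LS -> nat) := {s : LS & {ffun 'I_(ar s) -> 'I_2}}.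

Definition code (LS : finType) (ar : LS -> nat) (K : structure (Lang ar) nat) (a b : nat)
  : {set PT ar} := [set p : PT ar | pb (K (tag p) (pair_fn a b \o tagged p))].

Definition Astr (LS : finType) (ar : LS -> nat) (d : {set PT ar}) : structure (Lang ar) 'I_2 :=
  fun s x => (Tagged (fun s => {ffun 'I_(ar s) -> 'I_2}) [ffun i => x i] : PT ar) \in d.

Lemma pair_emb (LS : finType) (ar : LS -> nat) (K : structure (Lang ar) nat) a b :
  a <> b -> is_emb (Astr (code K a b)) K (pair_fn a b).
Proof.
move=> ab; split.
  move=> i j; case: i => [[|[|?]] pi] //; case: j => [[|[|?]] pj] //= h.
  1-3: apply: val_inj; move: h; rewrite /pair_fn /=; try done.
  1: by move=> h; case: ab; rewrite h.
move=> s x; rewrite /Astr inE /=.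
have -> : (pair_fn a b \o [ffun i => x i]) = pair_fn a b \o x.
  by apply: functional_extensionality => i; rewrite /= ffunE.
by split => [/pbP | h]; last apply/pbP.
Qed.

Lemma all_codes (LS : finType) (ar : LS -> nat) (K : structure (Lang ar) nat)
  (E : Type) (arE : E -> nat) (Ks : structure (lang_ext (Lang ar) arE) nat) :
  big_ramsey_structure K Ks -> forall l : seq {set PT ar},
  exists G, is_emb K K G /\ forall d, d \in l -> Pg K Ks (Astr d) G.
Proof.
move=> brs; elim => [|d l [G [Ge HG]]].
  by exists id; split; [exact: emb_id|].
have [g' [g'e P]] := step (Astr d) brs Ge.
exists (G \o g'); split; first exact: emb_comp g'e Ge.
move=> d'; rewrite inE => /orP [/eqP -> //|dl].
exact: Pg_comp (HG _ dl) g'e.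
Qed.

Theorem corollary2p5 (LS : finType) (ar : LS -> nat) (K : structure (Lang ar) nat)
  (E : Type) (arE : E -> nat) (Ks : structure (lang_ext (Lang ar) arE) nat) :
  ultrahomogeneous K ->
  finite_BRD K ->
  big_ramsey_structure K Ks ->
  recurrent K Ks ->
  interprets_omega_order Ks.
Proof.
move=> _ _ brs rec.
have [G [Ge HG]] := all_codes brs (enum {set PT ar}).
have [H He] := rec G Ge.
have Kexp := brs.1.
have HK : is_emb K K H.
  split; first exact: He.1.
  move=> s x.
  have e1 := He.2 (inl s) x; have e2 := Kexp s x; have e3 := Kexp s (G \o (H \o x)).
  have e4 := Ge.2 s (H \o x); rewrite /pullback in e1; tauto.
exists (fun a b => G (H a) < G (H b)); split.
  move=> a b c d ab cd hyp.
  have cE : code K a b = code K c d.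
    apply/setP => p; rewrite !inE.
    apply/pbP/pbP => h.
      apply/(Kexp _ _).1; apply/(hyp (inl (tag p)) (tagged p)).1; exact: (Kexp _ _).2.
    apply/(Kexp _ _).1; apply/(hyp (inl (tag p)) (tagged p)).2; exact: (Kexp _ _).2.
  have f1e := emb_comp (pair_emb K ab) HK.
  have f2e := emb_comp (pair_emb K cd) HK; rewrite -cE in f2e.
  have peq : pullback Ks (G \o (H \o pair_fn a b)) = pullback Ks (G \o (H \o pair_fn c d)).
    apply: functional_extensionality_dep => s; apply: functional_extensionality => x.
    apply: propositional_extensionality; rewrite /pullback.
    apply: (@iff_trans _ (Ks s (pair_fn a b \o x))); first exact: iff_sym (He.2 s (pair_fn a b \o x)).
    apply: (@iff_trans _ (Ks s (pair_fn c d \o x))); first exact: hyp.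
    exact: (He.2 s (pair_fn c d \o x)).
  have := HG _ (mem_enum _ (code K a b)) _ _ f1e f2e peq.
  rewrite /= => ->; done.
have [r [rb rh]] := @rank_iso (G \o H) (inj_comp Ge.1 He.1).
by exists r.
Qed.
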